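(* Let $n\ge3$ and $0<q<1$. For every relationship network $G$ on $V$, $P_D(G)\le 1-(1-q)^2$. Consequently, if every agent $j$ satisfies one of: $|F_j|\ge2$; or $F_j=\varnothing$ and $|I_j|\ge2$; or $E_j=V\setminus\{j\}$, then $P_R(G)\ge P_D(G)$.
   Context: Let $V=\{1,\dots,n\}$. A relationship network $G$ assigns to every unordered pair of distinct agents exactly one of the symmetric relations friends, enemies, impartial; $F_j,E_j,I_j$ are the friends, enemies, impartials of $j$. Each agent is needy independently with probability $q$; $N$ is the random needy set; every agent $j$ reports truthfully $(N,F_j,E_j)$. Random dictatorship $g^R$: for agent $j$, choice set $C_j$: if $F_j\ne\varnothing$, $C_j=F_j\cap N$ if nonempty, else $F_j$; if $F_j=\varnothing\ne I_j$, $C_j=I_j\cap N$ if nonempty, else $I_j$; otherwise $C_j=E_j\cap N$ if nonempty, else $E_j$. $g^R_i=\frac1n\sum_{j\ne i}\mathbf 1[i\in C_j]/|C_j|$. Duples $g^D$: for agent $l$ and $j\ne l$, $\mathrm{lev}_l(j)=1,\dots,6$ according as $j\in F_l\cap N$, $F_l\setminus N$, $I_l\cap N$, $I_l\setminus N$, $E_l\cap N$, $E_l\setminus N$. For distinct $j,k$, agent $l\notin\{j,k\}$ votes for $j$ against $k$ if $\mathrm{lev}_l(j)<\mathrm{lev}_l(k)$; $x_{jk}$ counts these votes. $g^D_j(\{j,k\})=1,\tfrac12,0$ as $x_{jk}>,=,<x_{kj}$, $g^D_k(\{j,k\})=1-g^D_j(\{j,k\})$, and $g^D_i=\frac{2}{n(n-1)}\sum_{j\ne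 i}g^D_i(\{i,j\})$. $P_R(G)$ and $P_D(G)$ denote the probabilities that $g^R$, resp. $g^D$, select a needy agent, i.e. $\mathbb E[\sum_{i\in N}g_i]$ under truthful reports. *)

(* Defs.v *)
From HB Require Import structures.
From mathcomp Require Import all_boot all_order all_algebra.
Set Implicit Arguments. Unset Strict Implicit. Unset Printing Implicit Defensive.
Import Order.TTheory GRing.Theory Num.Theory.

Inductive relation3 := Friends | Enemies | Impartial.

Definition relation3_eqb (a b : relation3) : bool :=
  match a, b with
  | Friends, Friends | Enemies, Enemies | Impartial, Impartial => true
  | _, _ => false end.
Lemma relation3_eqP : Equality.axiom relation3_eqb.
Proof. by case; case; constructor. Qed.
HB.instance Definition _ := hasDecEq.Build relation3 relation3_eqP.

(* A relationship network on V = 'I_n : G j k is the relation between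
   agents j and k (meaningful for j != k; required symmetric there). *)
Definition network (n : nat) := 'I_n -> 'I_n -> relation3.

Definition is_network n (G : network n) : Prop :=
  forall j k : 'I_n, j != k -> G j k = G k j.

Section Defs.
Variable n : nat.
Variable G : network n.

Definition friends (j : 'I_n) : {set 'I_n} := [set k | (k != j) && (G j k == Friends)].
Definition enemies (j : 'I_n) : {set 'I_n} := [set k | (k != j) && (G j k == Enemies)].
Definition impartials (j : 'I_n) : {set 'I_n} := [set k | (k != j) && (G j k == Impartial)].

Definition prefer (A N : {set 'I_n}) : {set 'I_n} :=
  if A :&: N != set0 then A :&: N else A.

Definition choice_set (N : {set 'I_n}) (j : 'I_n) : {set 'I_n} :=
  if friends j != set0 then prefer (friends j) N
  else if impartials j != set0 then prefer (impartials j) N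
  else prefer (enemies j) N.

Variable R : realFieldType.
Local Open Scope ring_scope.

Definition gR (N : {set 'I_n}) (i : 'I_n) : R :=
  n%:R^-1 * \sum_(j : 'I_n | j != i)
     ((i \in choice_set N j)%:R / #|choice_set N j|%:R).

Definition lev (N : {set 'I_n}) (l j : 'I_n) : nat :=
  if j \in friends l then (if j \in N then 1 else 2)%N
  else if j \in impartials l then (if j \in N then 3 else 4)%N
  else (if j \in N then 5 else 6)%N.

Definition votes (N : {set 'I_n}) (j k : 'I_n) : nat :=
  #|[set l : 'I_n | [&& l != j, l != k & (lev N l j < lev N l k)%N]]|.

Definition gDpair (N : {set 'I_n}) (j k : 'I_n) : R :=
  if (votes N k j < votes N j k)%N then 1
  else if votes N j k == votes N k j then 2^-1 else 0.

Definition gD (N : {set 'I_n}) (i : 'I_n) : R :=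
  2 / (n * (n - 1))%:R * \sum_(j : 'I_n | j != i) gDpair N i j.

(* Probability of selecting a needy agent: N random, each agent needy
   independently with probability q. *)
Definition Pneedy (q : R) (g : {set 'I_n} -> 'I_n -> R) : R :=
  \sum_(N : {set 'I_n}) (q ^+ #|N| * (1 - q) ^+ (n - #|N|)) *
     \sum_(i in N) g N i.

Definition P_R (q : R) : R := Pneedy q gR.
Definition P_D (q : R) : R := Pneedy q gD.

End Defs.

(* Main.v *)
Require Import Defs.
From HB Require Import structures.
From mathcomp Require Import all_boot all_order all_algebra.
From mathcomp Require Import ring lra zify.
Import Order.TTheory GRing.Theory Num.Theory.
Local Open Scope ring_scope.

Section W.
Variables (R : realFieldType) (n : nat) (q : R).
Definition w (N : {set 'I_n}) : R := q ^+ #|N| * (1 - q) ^+ (n - #|N|).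

Lemma sum_sets (F : 'I_n -> bool -> R) :
  \sum_(N : {set 'I_n}) \prod_(x : 'I_n) F x (x \in N) =
  \prod_(x : 'I_n) (F x true + F x false).
Proof.
have -> : \prod_(x : 'I_n) (F x true + F x false) = \prod_(x : 'I_n) \sum_(b : bool) F x b.
  by apply: eq_bigr => x _; rewrite big_bool.
rewrite bigA_distr_bigA /=.
rewrite (reindex (fun f : {ffun 'I_n -> bool} => [set x | f x])) /=.
  by apply: eq_bigr => f _; apply: eq_bigr => x _; rewrite inE.
exists (fun A : {set 'I_n} => [ffun x => x \in A]) => [f _|A _].
  by apply/ffunP => x; rewrite ffunE inE.
by apply/setP => x; rewrite inE ffunE.
Qed.

Lemma wsum (S : {set 'I_n}) :
  \sum_(N : {set 'I_n}) w N * (S :&: N == set0)%:R = (1 - q) ^+ #|S|.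
Proof.
set F := fun (x : 'I_n) (b : bool) => if b then (if x \in S then 0 else q) else 1 - q.
have E : forall N, w N * (S :&: N == set0)%:R = \prod_(x : 'I_n) F x (x \in N).
  move=> N; rewrite (bigID (fun x => x \in N)) /=.
  have -> : \prod_(x | x \notin N) F x (x \in N) = (1 - q) ^+ (n - #|N|).
    rewrite (eq_bigr (fun _ => 1 - q)); last by move=> x /negbTE ->.
    rewrite prodr_const; congr (_ ^+ _).
    have h := cardC N; rewrite card_ord in h.
    have -> : (n - #|N| = #|[predC N]|)%N.
      by move: h; set a := #|N|; set b := #|[predC N]|; move=> <-; rewrite addKn.
    by apply: eq_card => x; rewrite !inE.
  case: eqP => [H0|H0].
    rewrite (eq_bigr (fun _ => q)) ?prodr_const /w ?mulr1 //.
    move=> x xN; rewrite /F xN; case: ifP => // xS.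
    have : x \in S :&: N by rewrite inE xS xN.
    by rewrite H0 inE.
  have [x] : exists x, x \in S :&: N.
    by apply/set0Pn; apply/eqP.
  rewrite inE => /andP[xS xN].
  by rewrite (bigD1 x) //= /F xN xS !mul0r mulr0.
rewrite (eq_bigr _ (fun N _ => E N)) sum_sets.
rewrite (eq_bigr (fun x => if x \in S then 1 - q else 1)); last first.
  by move=> x _; rewrite /F; case: ifP; rewrite ?add0r // addrC subrK.
by rewrite -big_mkcond prodr_const.
Qed.

Lemma wsum1 : \sum_(N : {set 'I_n}) w N = 1.
Proof.
rewrite -[RHS](expr0 (1 - q)) -(cards0 'I_n) -wsum.
by apply: eq_bigr => N _; rewrite set0I eqxx (_ : true%:R = 1 :> R) ?mulr1.
Qed.

Lemma wsumC (S : {set 'I_n}) :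
  \sum_(N : {set 'I_n}) w N * (1 - (S :&: N == set0)%:R) = 1 - (1 - q) ^+ #|S|.
Proof.
rewrite (eq_bigr (fun N => w N - w N * (S :&: N == set0)%:R)); last by move=> N _; rewrite mulrBr mulr1.
by rewrite sumrB wsum1 wsum.
Qed.

Lemma w_ge0 N : 0 < q -> q < 1 -> 0 <= w N.
Proof. by move=> h0 h1; rewrite /w mulr_ge0 // exprn_ge0 //; [exact: ltW | rewrite subr_ge0; exact: ltW]. Qed.

Lemma swap2 (F : 'I_n -> 'I_n -> R) :
  \sum_i \sum_(j | j != i) F i j = \sum_i \sum_(j | j != i) F j i.
Proof.
rewrite (exchange_big_dep xpredT) //=; apply: eq_bigr => i _.
by apply: eq_bigl => j; rewrite eq_sym.
Qed.

Lemma dbl_const (X : R) :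
  \sum_(i : 'I_n) \sum_(j | j != i) X = X * (n * (n - 1))%:R.
Proof.
rewrite (eq_bigr (fun _ => X *+ (n - 1))); last first.
  move=> i _; rewrite (eq_bigl (fun j => j \in [set~ i])); last by move=> j; rewrite !inE.
  by rewrite sumr_const cardsC1 card_ord subn1.
by rewrite sumr_const card_ord -mulrnA mulr_natr mulnC.
Qed.

Section G.
Variable G : network n.

Lemma gDpair_sum N i j : gDpair G R N i j + gDpair G R N j i = 1.
Proof.
rewrite /gDpair; case: (ltngtP (votes G N j i) (votes G N i j)) => h.
- by rewrite addr0.
- by rewrite add0r.
- by field.
Qed.

Lemma gDpair_ge0 N i j : 0 <= gDpair G R N i j.
Proof. by rewrite /gDpair; case: ifP => _ //; case: ifP => _ //; rewrite invr_ge0. Qed.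

Lemma ind2 (N : {set 'I_n}) i j :
  ([set i; j] :&: N == set0) = (i \notin N) && (j \notin N).
Proof.
apply/eqP/andP => [H|[hi hj]].
  split; apply/negP => h.
    have : i \in [set i; j] :&: N by rewrite !inE eqxx h.
    by rewrite H inE.
  have : j \in [set i; j] :&: N by rewrite !inE eqxx h orbT.
  by rewrite H inE.
apply/setP => x; rewrite !inE; case: (x =P i) => [->|_]; first by rewrite (negbTE hi).
by case: (x =P j) => [->|_] //=; rewrite (negbTE hj).
Qed.

Lemma pair_bound (N : {set 'I_n}) (i j : 'I_n) :
  (i \in N)%:R * gDpair G R N i j + (j \in N)%:R * gDpair G R N j i
   <= 1 - ([set i; j] :&: N == set0)%:R.
Proof.
rewrite ind2; case: (i \in N); case: (j \in N) => /=; rewrite ?mul1r ?mul0r ?subr0 ?subrr ?addr0 ?add0r.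
- by rewrite gDpair_sum.
- by rewrite -(gDpair_sum N i j) lerDl gDpair_ge0.
- by rewrite -(gDpair_sum N j i) lerDl gDpair_ge0.
- by [].
Qed.

Definition kk : R := (2 / (n * (n - 1))%:R) / 2.
Definition ind (N : {set 'I_n}) (i j : 'I_n) : R := ([set i; j] :&: N == set0)%:R.

Lemma perN (N : {set 'I_n}) : \sum_(i in N) gD G R N i <=
   kk * \sum_i \sum_(j | j != i) (1 - ind N i j).
Proof.
pose c : R := 2 / (n * (n - 1))%:R.
have c0 : 0 <= c by rewrite divr_ge0 // ler0n.
have E : \sum_(i in N) gD G R N i =
   c * \sum_i \sum_(j | j != i) (i \in N)%:R * gDpair G R N i j.
  rewrite mulr_sumr big_mkcond /=; apply: eq_bigr => i _.
  rewrite /gD; case: (i \in N).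
    by congr (_ * _); apply: eq_bigr => j _; rewrite mul1r.
  by rewrite big1 ?mulr0 // => j _; rewrite mul0r.
rewrite E.
set T := \sum_i _.
have T2 : T + T <= \sum_i \sum_(j | j != i) (1 - ind N i j).
  rewrite {2}/T swap2 /T -big_split /=; apply: ler_sum => i _.
  rewrite -big_split /=; apply: ler_sum => j _; exact: pair_bound.
have -> : c * T = kk * (T + T).
  rewrite /kk /c; move: (2 / _ : R) => c'; by field.
have kk0 : 0 <= kk by rewrite /kk divr_ge0.
exact: (@ler_wpM2l _ kk kk0 _ _ T2).
Qed.

End G.

Lemma ind_w_sum (i j : 'I_n) : i != j ->
  \sum_(N : {set 'I_n}) w N * (1 - ind N i j) = 1 - (1 - q) ^+ 2.
Proof. by move=> ij; rewrite /ind wsumC cards2 ij. Qed.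

Lemma PD_bound (G : network n) : (3 <= n)%N -> 0 < q -> q < 1 ->
  P_D G q <= 1 - (1 - q) ^+ 2.
Proof.
move=> hn hq0 hq1.
rewrite /P_D /Pneedy.
apply: le_trans (_ : \sum_(N : {set 'I_n}) w N * (kk * \sum_i \sum_(j | j != i) (1 - ind N i j)) <= _).
  apply: ler_sum => N _; exact: (@ler_wpM2l _ _ (w_ge0 N hq0 hq1) _ _ (perN G N)).
rewrite (eq_bigr (fun N => kk * \sum_i \sum_(j | j != i) w N * (1 - ind N i j))); last first.
  move=> N _; rewrite mulrCA mulr_sumr; congr (_ * _); apply: eq_bigr => i _.
  by rewrite mulr_sumr.
rewrite -mulr_sumr exchange_big /=.
rewrite (eq_bigr (fun i => \sum_(j | j != i) (1 - (1 - q) ^+ 2))); last first.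
  move=> i _; rewrite exchange_big /=; apply: eq_bigr => j ji.
  by apply: ind_w_sum; rewrite eq_sym.
rewrite dbl_const /kk.
have nz : (n * (n - 1))%:R != 0 :> R.
  by rewrite pnatr_eq0 muln_eq0 negb_or; apply/andP; split; apply/eqP; lia.
move: nz; move: ((n * (n - 1))%:R) => m nz.
rewrite (_ : _ * _ = 1 - (1 - q) ^+ 2) //.
by field.
Qed.

Section RD.
Variable G : network n.

Lemma exA (j : 'I_n) : (3 <= n)%N ->
  [|| (2 <= #|friends G j|)%N,
      (friends G j == set0) && (2 <= #|impartials G j|)%N
    | enemies G j == [set: 'I_n] :\ j] ->
  exists A : {set 'I_n}, [/\ forall N, choice_set G N j = prefer A N,
     j \notin A & (1 < #|A|)%N].
Proof.
move=> hn; case/or3P => [hF|/andP[/eqP hF hI]|/eqP hE].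
- exists (friends G j); split => //.
  + move=> N; rewrite /choice_set ifT //; apply/set0Pn.
    by case/card_gt1P: hF => x [y [hx _ _]]; exists x.
  + by rewrite inE eqxx.
- exists (impartials G j); split => //.
  + move=> N; rewrite /choice_set hF eqxx /= ifT //; apply/set0Pn.
    by case/card_gt1P: hI => x [y [hx _ _]]; exists x.
  + by rewrite inE eqxx.
- have hF : friends G j = set0.
    apply/setP => k; rewrite !inE; apply/negP => /andP[kj /eqP hk].
    have : k \in enemies G j by rewrite hE !inE kj.
    by rewrite inE hk => /andP[_ /eqP].
  have hI : impartials G j = set0.
    apply/setP => k; rewrite !inE; apply/negP => /andP[kj /eqP hk].
    have : k \in enemies G j by rewrite hE !inE kj.
    by rewrite inE hk => /andP[_ /eqP].
  exists (enemies G j); split.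
  + by move=> N; rewrite /choice_set hF hI eqxx.
  + by rewrite inE eqxx.
  + have h : (#|[set: 'I_n] :\ j|).+1 = n.
      by rewrite -[RHS](card_ord n) -cardsT (cardsD1 j [set: 'I_n]) in_setT.
    by rewrite hE -ltnS h.
Qed.

Definition tR (N : {set 'I_n}) (j : 'I_n) : R :=
  \sum_(i | (i \in N) && (i != j))
     ((i \in choice_set G N j)%:R / #|choice_set G N j|%:R).

Lemma sum_gR (N : {set 'I_n}) : \sum_(i in N) gR G R N i = n%:R^-1 * \sum_j tR N j.
Proof.
rewrite /gR -mulr_sumr; congr (_ * _).
rewrite (exchange_big_dep xpredT) //=; apply: eq_bigr => j _.
by apply: eq_bigl => i; rewrite eq_sym.
Qed.

Lemma tR_bound (N : {set 'I_n}) (j : 'I_n) (A : {set 'I_n}) a b :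
  choice_set G N j = prefer A N -> j \notin A -> a \in A -> b \in A ->
  1 - ind N a b <= tR N j.
Proof.
move=> hC jA aA bA; rewrite /tR hC /prefer.
case: ifP => [hAN|/negbFE/eqP hAN].
- set C := A :&: N.
  have Cpos : (0 < #|C|)%N by rewrite card_gt0.
  have -> : \sum_(i | (i \in N) && (i != j)) (i \in C)%:R / #|C|%:R
          = \sum_(i in C) (#|C|%:R)^-1 :> R.
    rewrite big_mkcond [RHS]big_mkcond /=; apply: eq_bigr => i _.
    case: (boolP (i \in C)) => iC.
      have : i \in C by [].
      rewrite inE => /andP[iA iN]; rewrite iN /= mul1r.
      by case: eqP => // ij; move: jA; rewrite -ij iA.
    by case: ifP => // _; rewrite mul0r.
  rewrite sumr_const.
  have e : forall k : nat, (0 < k)%N -> (k%:R : R)^-1 *+ k = 1.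
    move=> k kp; rewrite -(mulr_natr (k%:R : R)^-1 k) mulVf //.
    by rewrite pnatr_eq0 -lt0n.
  rewrite e //.
  have : 0 <= ind N a b by rewrite /ind ler0n.
  lra.
- have aN : a \notin N.
    apply/negP => aN; have : a \in A :&: N by rewrite inE aA aN.
    by rewrite hAN inE.
  have bN : b \notin N.
    apply/negP => bN; have : b \in A :&: N by rewrite inE bA bN.
    by rewrite hAN inE.
  have -> : ind N a b = 1 by rewrite /ind ind2 aN bN.
  rewrite subrr; apply: sumr_ge0 => i _; by rewrite divr_ge0 // ler0n.
Qed.

End RD.

Lemma PR_bound (G : network n) : (3 <= n)%N -> 0 < q -> q < 1 ->
  (forall j : 'I_n,
        [|| (2 <= #|friends G j|)%N,
            (friends G j == set0) && (2 <= #|impartials G j|)%N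
          | enemies G j == [set: 'I_n] :\ j]) ->
  1 - (1 - q) ^+ 2 <= P_R G q.
Proof.
move=> hn hq0 hq1 hyp.
rewrite /P_R /Pneedy.
rewrite (eq_bigr (fun N => n%:R^-1 * \sum_j w N * tR G N j)); last first.
  by move=> N _; rewrite sum_gR mulrCA mulr_sumr.
rewrite -mulr_sumr exchange_big /=.
have nz : n%:R != 0 :> R by rewrite pnatr_eq0; apply/eqP; lia.
apply: le_trans (_ : n%:R^-1 * \sum_(j : 'I_n) (1 - (1 - q) ^+ 2) <= _).
  rewrite sumr_const card_ord -(mulr_natr (1 - (1 - q) ^+ 2) n).
  by rewrite mulrC -mulrA mulfV ?mulr1.
have h0 : 0 <= n%:R^-1 :> R by rewrite invr_ge0 ler0n.
apply: (@ler_wpM2l _ _ h0 _ _); apply: ler_sum => j _.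
have [A [hC jA cA]] := exA G j hn (hyp j).
case/card_gt1P: cA => a [b [aA bA ab]].
rewrite -(ind_w_sum a b ab); apply: ler_sum => N _.
apply: (@ler_wpM2l _ _ (w_ge0 N hq0 hq1) _ _).
exact: tR_bound (hC N) jA aA bA.
Qed.
End W.

Theorem mainTheorem7 (R : realFieldType) (n : nat) (q : R)
  (hn : (3 <= n)%N) (hq0 : 0 < q) (hq1 : q < 1) :
  (forall G : network n, is_network G -> P_D G q <= 1 - (1 - q) ^+ 2) /\
  (forall G : network n, is_network G ->
     (forall j : 'I_n,
        [|| (2 <= #|friends G j|)%N,
            (friends G j == set0) && (2 <= #|impartials G j|)%N
          | enemies G j == [set: 'I_n] :\ j]) ->
     P_D G q <= P_R G q).
Proof.
split => G _; first exact: PD_bound.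
move=> H; exact: le_trans (PD_bound R n q G hn hq0 hq1) (PR_bound R n q G hn hq0 hq1 H).
Qed.
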